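(* Fix an integer $L\ge1$, $\alpha>2$ and $\gamma>0$, and let $\Delta=\pi\,\frac{2}{\alpha}\,\Gamma(2/\alpha)\,\Gamma(1-2/\alpha)$. For $\lambda\ge 0$ define $$F(\gamma,\lambda)=1-\sum_{i=0}^{L-1}\frac{(\lambda\Delta\gamma^{2/\alpha})^i}{i!}\exp\!\left(-\lambda\Delta\gamma^{2/\alpha}\right)$$ (the outage probability of the optimum combining receiver with $L$ antennas in a Poisson field of interferers of density $\lambda$ with Rayleigh fading, in the interference-limited regime $\sigma^2=0$, with normalized threshold $\gamma$). Let $$\lambda_{\max}=\arg\max_{0\le\lambda<\infty}\lambda\bigl(1-F(\gamma,\lambda)\bigr).$$ Then $$\lambda_{\max}=\frac{g(L)}{\Delta\gamma^{2/\alpha}},$$ where $g(L)$ is the positive root of the polynomial $$Q(t)=\sum_{i=0}^{L-1}\frac{t^i}{i!}-\frac{t^L}{(L-1)!},$$ and this root satisfies $\frac{L}{2}\le g(L)\le L$. Moreover, the maximal spatial throughput is $$T_{\max}=\lambda_{\max}\bigl(1-F(\gamma,\lambda_{\max})\bigr)=\frac{g(L)^{L+1}}{(L-1)!\,\Delta\gamma^{2/\alpha}}\exp(-g(L)).$$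
   Context: $\Gamma(\cdot)$ denotes the Gamma function. The quantity $\lambda(1-F(\gamma,\lambda))$ is the spatial throughput (mean number of successful transmissions per unit area) of a single-hop ALOHA network with contention density $\lambda$. *)

(* Defs.v *)
From Stdlib Require Import Reals.
From Coquelicot Require Import Coquelicot.
Open Scope R_scope.

Definition Gamma_fn (s : R) : R :=
  RInt_gen (fun t => Rpower t (s - 1) * exp (- t))
           (at_right 0) (Rbar_locally p_infty).

Definition Delta_alpha (alpha : R) : R :=
  PI * (2 / alpha) * Gamma_fn (2 / alpha) * Gamma_fn (1 - 2 / alpha).

Definition outage (L : nat) (alpha gamma lambda : R) : R :=
  let x := lambda * Delta_alpha alpha * Rpower gamma (2 / alpha) in
  1 - sum_f_R0 (fun i => x ^ i / INR (Factorial.fact i)) (L - 1) * exp (- x).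

Definition throughput (L : nat) (alpha gamma lambda : R) : R :=
  lambda * (1 - outage L alpha gamma lambda).

Definition Qpoly (L : nat) (t : R) : R :=
  sum_f_R0 (fun i => t ^ i / INR (Factorial.fact i)) (L - 1) - t ^ L / INR (Factorial.fact (L - 1)).

(* Main.v *)
Require Import Defs.
From Stdlib Require Import Reals Lra.
From Coquelicot Require Import Coquelicot.
Open Scope R_scope.
From Stdlib Require Import Lia Classical.

Definition gf (s t : R) := Rpower t (s - 1) * exp (- t).

Lemma cont_of (h : R -> R) z : ex_derive h z -> continuous h z.
Proof. apply (@ex_derive_continuous R_AbsRing R_NormedModule). Qed.

Lemma exRI (h : R -> R) a b : (forall z, Rmin a b <= z <= Rmax a b -> continuous h z) -> ex_RInt h a b.
Proof. apply (@ex_RInt_continuous R_CompleteNormedModule). Qed.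

Lemma RIu (h : R -> R) a b l : is_RInt h a b l -> RInt h a b = l.
Proof. apply (@is_RInt_unique R_CompleteNormedModule). Qed.
Lemma f_cont s z : 0 < z -> continuous (gf s) z.
Proof. intros Hz. apply cont_of. unfold gf, Rpower. auto_derive. lra. Qed.

Lemma f_ex s a b : 0 < a -> 0 < b -> ex_RInt (gf s) a b.
Proof.
  intros Ha Hb. apply exRI. intros z Hz. apply f_cont.
  destruct Hz as [Hz _]. eapply Rlt_le_trans; [|exact Hz].
  unfold Rmin; destruct (Rle_dec a b); lra.
Qed.

Lemma g_cont s z : 0 < z -> continuous (fun t => Rpower t (s-1)) z.
Proof. intros Hz. apply cont_of. unfold Rpower. auto_derive. lra. Qed.

Lemma bound_01 s a : 0 < s -> 0 < a < 1 -> RInt (gf s) a 1 <= 1 / s.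
Proof.
  intros Hs Ha.
  assert (Hex : ex_RInt (fun t => Rpower t (s-1)) a 1).
  { apply exRI. intros z Hz. apply g_cont.
    rewrite Rmin_left in Hz by lra. lra. }
  assert (H1 : is_RInt (fun t => s * Rpower t (s-1)) a 1 (minus (Rpower 1 s) (Rpower a s))).
  { apply (is_RInt_derive (fun t => Rpower t s)).
    - intros x Hx. rewrite Rmin_left in Hx by lra. apply is_derive_Reals.
      apply derivable_pt_lim_power. lra.
    - intros x Hx. rewrite Rmin_left in Hx by lra. apply cont_of.
      unfold Rpower. auto_derive. lra. }
  apply RIu in H1.
  assert (H2 : RInt (fun t => s * Rpower t (s-1)) a 1 = s * RInt (fun t => Rpower t (s-1)) a 1).
  { apply (RInt_scal (fun t => Rpower t (s-1)) a 1 s). exact Hex. }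
  assert (H3 : RInt (gf s) a 1 <= RInt (fun t => Rpower t (s-1)) a 1).
  { apply RInt_le; [lra| apply f_ex; lra | exact Hex |].
    intros x Hx. unfold gf. rewrite <- (Rmult_1_r (Rpower x (s-1))) at 2.
    apply Rmult_le_compat_l. unfold Rpower; left; apply exp_pos.
    rewrite <- exp_0. left; apply exp_increasing; lra. }
  rewrite H2 in H1.
  assert (Hp1 : Rpower 1 s = 1) by (unfold Rpower; rewrite ln_1, Rmult_0_r; apply exp_0).
  assert (Hpa : 0 < Rpower a s) by (unfold Rpower; apply exp_pos).
  rewrite Hp1 in H1. unfold minus, plus, opp in H1; simpl in H1.
  assert (Hr : forall r : R, s * r = 1 + - Rpower a s -> r = (1 - Rpower a s) / s).
  { intros r Hr. unfold Rminus. rewrite <- Hr. field. lra. }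
  assert (H := Hr _ H1).
  rewrite H in H3. apply (Rle_trans _ _ _ H3). unfold Rdiv.
  apply Rmult_le_compat_r. left; apply Rinv_0_lt_compat; lra. lra.
Qed.

Lemma exp_le' x y : x <= y -> exp x <= exp y.
Proof. intros H. destruct (Req_dec x y) as [->|]; [lra|]. left; apply exp_increasing; lra. Qed.

Lemma bound_1b s b : s < 1 -> 1 < b -> RInt (gf s) 1 b <= 1.
Proof.
  intros Hs Hb.
  assert (Hex : ex_RInt (fun t => exp (- t)) 1 b).
  { apply exRI. intros z Hz. apply cont_of. auto_derive. auto. }
  assert (H1 : is_RInt (fun t => exp (- t)) 1 b (minus (- exp (- b)) (- exp (- 1)))).
  { apply (is_RInt_derive (fun t => - exp (- t))).
    - intros x Hx. auto_derive; auto. ring.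
    - intros x Hx. apply cont_of. auto_derive. auto. }
  apply RIu in H1.
  assert (H3 : RInt (gf s) 1 b <= RInt (fun t => exp (- t)) 1 b).
  { apply RInt_le; [lra| apply f_ex; lra | exact Hex |].
    intros x Hx. unfold gf. rewrite <- (Rmult_1_l (exp (- x))) at 2.
    apply Rmult_le_compat_r. left; apply exp_pos.
    unfold Rpower. assert (0 <= ln x) by (rewrite <- ln_1; apply ln_le; lra).
    apply (Rle_trans _ (exp 0)); [apply exp_le'; nra|rewrite exp_0; lra]. }
  rewrite H1 in H3. unfold minus, plus, opp in H3; simpl in H3.
  assert (exp (- b) > 0) by apply exp_pos.
  assert (exp (- 1) <= 1) by (apply (Rle_trans _ (exp 0)); [apply exp_le'; lra|rewrite exp_0; lra]). lra.
Qed.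

Lemma RInt_split s a b : 0 < a -> 0 < b -> forall c, 0 < c ->
  RInt (gf s) a b = RInt (gf s) a c + RInt (gf s) c b.
Proof.
  intros Ha Hb c Hc. symmetry.
  apply (RInt_Chasles (V := R_CompleteNormedModule)); apply f_ex; lra.
Qed.

Lemma RInt_nonneg s a b : 0 < a <= b -> 0 <= RInt (gf s) a b.
Proof.
  intros H. apply RInt_ge_0; [lra| apply f_ex; lra|].
  intros x Hx. unfold gf, Rpower. left. apply Rmult_lt_0_compat; apply exp_pos.
Qed.

Lemma bound_all s a b : 0 < s < 1 -> 0 < a < 1 -> 1 < b -> RInt (gf s) a b <= 1 / s + 1.
Proof.
  intros Hs Ha Hb. rewrite (RInt_split s a b) with (c := 1) by lra.
  pose proof (bound_01 s a). pose proof (bound_1b s b). 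
  assert (RInt (gf s) a 1 <= 1/s) by (apply H; lra).
  assert (RInt (gf s) 1 b <= 1) by (apply H0; lra). lra.
Qed.

Lemma lower_pos s : s < 1 -> RInt (gf s) (1/2) 2 > 0.
Proof.
  intros Hs.
  set (c := exp ((s-1) * ln 2) * exp (- 2)).
  assert (Hc : 0 < c) by (unfold c; apply Rmult_lt_0_compat; apply exp_pos).
  assert (H : RInt (fun _ => c) (1/2) 2 <= RInt (gf s) (1/2) 2).
  { apply RInt_le; [lra| apply exRI; intros; apply continuous_const | apply f_ex; lra |].
    intros x Hx. unfold c, gf, Rpower. apply Rmult_le_compat.
    left; apply exp_pos. left; apply exp_pos.
    apply exp_le'.
    assert (ln x <= ln 2) by (apply ln_le; lra). nra.
    apply exp_le'. lra. }
  rewrite RInt_const in H. unfold scal in H; simpl in H. unfold mult in H; simpl in H.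
  nra.
Qed.


Lemma ball_R (x e y : R) : Rabs (y - x) < e -> ball x e y.
Proof. intros H. exact H. Qed.
Lemma ball_R' (x e y : R) : ball x e y -> Rabs (y - x) < e.
Proof. intros H. exact H. Qed.

Lemma Gamma_is s : 0 < s < 1 -> exists v, 0 < v /\
  is_RInt_gen (gf s) (at_right 0) (Rbar_locally p_infty) v.
Proof.
  intros Hs.
  set (E := fun y => exists a b, 0 < a < 1 /\ 1 < b /\ y = RInt (gf s) a b).
  assert (HB : bound E).
  { exists (1/s + 1). intros y [a [b [Ha [Hb ->]]]]. apply bound_all; lra. }
  assert (HE : exists y, E y) by (exists (RInt (gf s) (1/2) 2), (1/2), 2; repeat split; lra).
  destruct (completeness E HB HE) as [v [Hub Hmin]].
  exists v. split.
  { apply Rlt_le_trans with (RInt (gf s) (1/2) 2). apply lower_pos; lra.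
    apply Hub. exists (1/2), 2; repeat split; lra. }
  intros P [eps HP].
  destruct (classic (exists y, E y /\ v - eps < y)) as [[y [[a0 [b0 [Ha0 [Hb0 ->]]]] Hy]]|Hn].
  2: { exfalso. assert (v <= v - eps). { apply Hmin. intros y Ey.
         destruct (Rle_dec y (v - eps)); auto. exfalso; apply Hn; exists y; split; auto; lra. }
       destruct eps; simpl in *; lra. }
  apply (Filter_prod _ _ _ (fun a => 0 < a < a0) (fun b => b0 < b)).
  - exists (mkposreal a0 (proj1 Ha0)). intros y Hy1 Hy0. apply ball_R' in Hy1. simpl in Hy1.
    split; auto. rewrite Rminus_0_r in Hy1. apply Rabs_def2 in Hy1. lra.
  - exists b0. auto.
  - intros a b Ha Hb. exists (RInt (gf s) a b). split.
    + simpl. apply (RInt_correct (V := R_CompleteNormedModule)). apply f_ex; lra.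
    + apply HP. apply ball_R.
      assert (RInt (gf s) a b <= v) by (apply Hub; exists a, b; repeat split; lra).
      assert (RInt (gf s) a0 b0 <= RInt (gf s) a b).
      { rewrite (RInt_split s a b) with (c := a0) by lra.
        rewrite (RInt_split s a0 b) with (c := b0) by lra.
        assert (0 <= RInt (gf s) a a0) by (apply RInt_nonneg; lra).
        assert (0 <= RInt (gf s) b0 b) by (apply RInt_nonneg; lra). lra. }
      destruct eps; simpl in *. apply Rabs_def1; lra.
Qed.

Lemma Gamma_pos s : 0 < s < 1 -> 0 < Gamma_fn s.
Proof.
  intros Hs. destruct (Gamma_is s Hs) as [v [Hv Hi]].
  unfold Gamma_fn. change (fun t => Rpower t (s - 1) * exp (- t)) with (gf s).
  rewrite (is_RInt_gen_unique (V := R_CompleteNormedModule) _ _ Hi). exact Hv.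
Qed.

Definition Sx (m : nat) (x : R) := sum_f_R0 (fun i => x ^ i / INR (Factorial.fact i)) m.
Definition Qm (m : nat) (x : R) := Sx m x - x ^ (S m) / INR (Factorial.fact m).
Definition hh (m : nat) (x : R) := x * Sx m x * exp (- x).

Lemma fact_pos' n : 0 < INR (Factorial.fact n).
Proof. apply lt_0_INR. apply Factorial.lt_O_fact. Qed.

Lemma Sx_deriv m x : is_derive (Sx m) x (Sx m x - x ^ m / INR (Factorial.fact m)).
Proof.
  induction m.
  - unfold Sx; simpl. apply (is_derive_ext (fun _ => 1 / 1)). intros; simpl; reflexivity.
    auto_derive; auto. field.
  - apply (is_derive_ext (fun y => Sx m y + y^(S m)/INR(Factorial.fact (S m)))). intros; reflexivity.
    assert (E : Sx (S m) x = Sx m x + x^(S m)/INR(Factorial.fact (S m))) by reflexivity. rewrite E.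
    replace (Sx m x + x ^ S m / INR (Factorial.fact (S m)) - x ^ S m / INR (Factorial.fact (S m)))
      with ((Sx m x - x ^ m / INR (Factorial.fact m)) + INR (S m) * x ^ m / INR (Factorial.fact (S m))).
    2:{ rewrite Rfunctions.fact_simpl, mult_INR. pose proof (fact_pos' m).
        assert (INR (S m) <> 0) by (apply not_0_INR; lia). field. lra. }
    apply (is_derive_plus (Sx m)). exact IHm.
    pose proof (fact_pos' (S m)).
    auto_derive. lra. change (match m with 0%nat => 1 | S _ => INR m + 1 end) with (INR (S m)). change (Factorial.fact m + m * Factorial.fact m)%nat with (Factorial.fact (S m)). unfold Rdiv. ring.
Qed.

Lemma hh_deriv m x : is_derive (hh m) x (Qm m x * exp (- x)).
Proof.
  unfold hh. auto_derive.
  - exists (Sx m x - x ^ m / INR (Factorial.fact m)). apply Sx_deriv.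
  - replace (Derive (fun x0 => Sx m x0) x) with (Sx m x - x ^ m / INR (Factorial.fact m))
      by (symmetry; apply is_derive_unique; apply Sx_deriv).
    unfold Qm. simpl. field.
    apply Rgt_not_eq, fact_pos'.
Qed.

Lemma Qm_cont m x : continuous (Qm m) x.
Proof.
  apply (@ex_derive_continuous R_AbsRing R_NormedModule).
  unfold Qm. auto_derive. exists (Sx m x - x ^ m / INR (Factorial.fact m)). apply Sx_deriv.
Qed.

Lemma Sx_0 m : Sx m 0 = 1.
Proof.
  induction m. unfold Sx; simpl; field.
  change (Sx (S m) 0) with (Sx m 0 + 0^(S m)/INR(Factorial.fact (S m))).
  rewrite IHm. simpl. lra.
Qed.

Lemma Qm_0 m : Qm m 0 = 1.
Proof. unfold Qm. rewrite Sx_0. simpl. lra. Qed.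

Lemma term_le m i x y : (i <= m)%nat -> 0 <= x <= y -> x ^ m * y ^ i <= y ^ m * x ^ i.
Proof.
  intros Hi Hxy. replace m with (i + (m - i))%nat by lia. rewrite !pow_add.
  assert (0 <= x ^ i) by (apply pow_le; lra).
  assert (0 <= y ^ i) by (apply pow_le; lra).
  assert (x ^ (m - i) <= y ^ (m - i)) by (apply pow_incr; lra).
  assert (0 <= x^i * y^i) by (apply Rmult_le_pos; auto).
  replace (x ^ i * x ^ (m - i) * y ^ i) with ((x^i * y^i) * x ^ (m-i)) by ring.
  replace (y ^ i * y ^ (m - i) * x ^ i) with ((x^i * y^i) * y ^ (m-i)) by ring.
  apply Rmult_le_compat_l; auto.
Qed.

Lemma Qm_sign m x y : 0 < x < y -> Qm m x <= 0 -> Qm m y < 0.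
Proof.
  intros Hxy HQ. unfold Qm in *.
  assert (H1 : x ^ m * Sx m y <= y ^ m * Sx m x).
  { unfold Sx. rewrite !scal_sum. apply sum_Rle. intros i Hi.
    pose proof (term_le m i x y Hi ltac:(lra)). pose proof (fact_pos' i).
    unfold Rdiv. apply Rmult_le_reg_r with (INR (Factorial.fact i)); auto.
    replace (y ^ i * / INR (Factorial.fact i) * x ^ m * INR (Factorial.fact i)) with (x^m * y^i)
      by (field; lra).
    replace (x ^ i * / INR (Factorial.fact i) * y ^ m * INR (Factorial.fact i)) with (y^m * x^i)
      by (field; lra). exact H. }
  pose proof (fact_pos' m) as Hf.
  assert (Hxm : 0 < x ^ m) by (apply pow_lt; lra).
  assert (Hym : 0 < y ^ m) by (apply pow_lt; lra).
  assert (H2 : y ^ m * Sx m x <= y ^ m * (x ^ S m / INR (Factorial.fact m))).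
  { apply Rmult_le_compat_l; lra. }
  assert (H3 : Sx m y <= y ^ m * x / INR (Factorial.fact m)).
  { apply Rmult_le_reg_l with (x ^ m); auto.
    replace (x ^ m * (y ^ m * x / INR (Factorial.fact m))) with (y ^ m * (x ^ S m / INR (Factorial.fact m)))
      by (simpl; field; lra). lra. }
  assert (H4 : y ^ m * x / INR (Factorial.fact m) < y ^ S m / INR (Factorial.fact m)).
  { simpl. unfold Rdiv. apply Rmult_lt_compat_r. apply Rinv_0_lt_compat; auto. nra. }
  lra.
Qed.

Definition aa (t : R) (i : nat) := t ^ i / INR (Factorial.fact i).

Lemma aa_succ t i : aa t (S i) = aa t i * (t / INR (S i)).
Proof.
  unfold aa. rewrite Rfunctions.fact_simpl, mult_INR. pose proof (fact_pos' i).
  assert (INR (S i) <> 0) by (apply not_0_INR; lia). rewrite <- tech_pow_Rmult. field. split; lra.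
Qed.

Lemma aa_nonneg t i : 0 <= t -> 0 <= aa t i.
Proof. intros. unfold aa. pose proof (fact_pos' i). apply Rdiv_le_0_compat; auto. apply pow_le; auto. Qed.

Lemma chain_up t k : 0 <= t -> forall i, (forall j, (i <= j < i + k)%nat -> INR (S j) <= t) ->
  aa t i <= aa t (i + k).
Proof.
  intros Ht. induction k; intros i Hj.
  - rewrite Nat.add_0_r. lra.
  - replace (i + S k)%nat with (S (i + k)) by lia. rewrite aa_succ.
    assert (H1 : aa t i <= aa t (i + k)) by (apply IHk; intros; apply Hj; lia).
    assert (H2 : INR (S (i + k)) <= t) by (apply Hj; lia).
    assert (H3 : 0 < INR (S (i + k))) by (apply lt_0_INR; lia).
    assert (1 <= t / INR (S (i+k))) by (unfold Rdiv; rewrite <- (Rinv_r (INR (S (i+k)))) by lra; apply Rmult_le_compat_r; [left; apply Rinv_0_lt_compat; lra | lra]).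
    pose proof (aa_nonneg t (i + k) Ht). nra.
Qed.

Lemma chain_down t k : 0 <= t -> forall i, (forall j, (i <= j < i + k)%nat -> t <= INR (S j)) ->
  aa t (i + k) <= aa t i.
Proof.
  intros Ht. induction k; intros i Hj.
  - rewrite Nat.add_0_r. lra.
  - replace (i + S k)%nat with (S (i + k)) by lia. rewrite aa_succ.
    assert (H1 : aa t (i + k) <= aa t i) by (apply IHk; intros; apply Hj; lia).
    assert (H2 : t <= INR (S (i + k))) by (apply Hj; lia).
    assert (H3 : 0 < INR (S (i + k))) by (apply lt_0_INR; lia).
    assert (t / INR (S (i+k)) <= 1) by (unfold Rdiv; rewrite <- (Rinv_r (INR (S (i+k)))) by lra; apply Rmult_le_compat_r; [left; apply Rinv_0_lt_compat; lra | lra]).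
    assert (0 <= t / INR (S (i+k))) by (apply Rdiv_le_0_compat; lra).
    pose proof (aa_nonneg t (i + k) Ht). nra.
Qed.

Lemma tail_sum (f : nat -> R) c K : forall n, (K <= n)%nat ->
  (forall i, (n - K <= i <= n)%nat -> c <= f i) -> (forall i, 0 <= f i) ->
  INR (S K) * c <= sum_f_R0 f n.
Proof.
  induction K; intros n HK Hc Hf.
  - assert (c <= f n) by (apply Hc; lia).
    destruct n. simpl. lra.
    simpl sum_f_R0. assert (0 <= sum_f_R0 f n).
    { apply cond_pos_sum. auto. } simpl. lra.
  - destruct n. lia. simpl sum_f_R0.
    assert (INR (S K) * c <= sum_f_R0 f n) by (apply IHK; [lia| intros; apply Hc; lia | auto]).
    assert (c <= f (S n)) by (apply Hc; lia).
    rewrite S_INR. lra.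
Qed.

Lemma Sx_aa m t : Sx m t = sum_f_R0 (aa t) m.
Proof. reflexivity. Qed.

Lemma Q_at_L m : Qm m (INR (S m)) <= 0.
Proof.
  set (t := INR (S m)). assert (Ht : 0 < t) by (apply lt_0_INR; lia).
  unfold Qm. rewrite Sx_aa.
  assert (H1 : sum_f_R0 (aa t) m <= sum_f_R0 (fun _ => aa t m) m).
  { apply sum_Rle. intros i Hi. pose proof (chain_up t (m - i) ltac:(lra) i) as C.
    replace (i + (m-i))%nat with m in C by lia. apply C. intros j Hj. unfold t. apply le_INR. lia. }
  rewrite sum_cte in H1.
  replace (t ^ S m / INR (Factorial.fact m)) with (aa t m * t) by (unfold aa; rewrite <- tech_pow_Rmult; unfold Rdiv; ring).
  fold t in H1. lra.
Qed.

Lemma Q_at_half m : 0 <= Qm m (INR (S m) / 2).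
Proof.
  set (t := INR (S m) / 2). assert (Ht : 0 < t) by (unfold t; assert (0 < INR (S m)) by (apply lt_0_INR; lia); lra).
  assert (HK : exists K, (S m = K + K \/ S m = S (K + K))%nat).
  { destruct (Nat.Even_or_Odd (S m)) as [[K HK]|[K HK]]; exists K; lia. }
  destruct HK as [K HK].
  unfold Qm. rewrite Sx_aa.
  assert (H1 : INR (S K) * aa t m <= sum_f_R0 (aa t) m).
  { apply tail_sum. lia.
    - intros i Hi. pose proof (chain_down t (m - i) ltac:(lra) i) as C.
      replace (i + (m-i))%nat with m in C by lia. apply C. intros j Hj. unfold t. apply Rmult_le_reg_r with 2. lra.
      replace (INR (S m) / 2 * 2) with (INR (S m)) by field.
      replace (INR (S j) * 2) with (INR (S j * 2)) by (rewrite mult_INR; reflexivity).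
      apply le_INR. lia.
    - intros; apply aa_nonneg; lra. }
  assert (H2 : t <= INR (S K)).
  { unfold t. apply Rmult_le_reg_r with 2. lra.
    replace (INR (S m) / 2 * 2) with (INR (S m)) by field.
    replace (INR (S K) * 2) with (INR (S K * 2)) by (rewrite mult_INR; reflexivity).
    apply le_INR. lia. }
  replace (t ^ S m / INR (Factorial.fact m)) with (t * aa t m) by (unfold aa; rewrite <- tech_pow_Rmult; unfold Rdiv; ring).
  pose proof (aa_nonneg t m ltac:(lra)). nra.
Qed.

Lemma root_exists m : { g | INR (S m) / 2 <= g <= INR (S m) /\ Qm m g = 0 }.
Proof.
  assert (H0 : 0 < INR (S m)) by (apply lt_0_INR; lia).
  destruct (IVT_gen_consistent (Qm m) (INR (S m) / 2) (INR (S m)) 0) as [g [Hg HQ]].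
  - intros x. apply Qm_cont.
  - pose proof (Q_at_L m). pose proof (Q_at_half m). split.
    apply Rle_trans with (Qm m (INR (S m))); [apply Rmin_r | lra].
    apply Rle_trans with (Qm m (INR (S m) / 2)); [lra | apply Rmax_l].
  - exists g. rewrite Rmin_left, Rmax_right in Hg by lra. auto.
Qed.

Lemma hh_strict m g : 0 < g -> Qm m g = 0 -> forall x, 0 <= x -> x <> g -> hh m x < hh m g.
Proof.
  intros Hg HQg x Hx Hne.
  assert (Der : forall c, derivable_pt_lim (hh m) c (Qm m c * exp (- c))).
  { intros c. apply is_derive_Reals. apply hh_deriv. }
  destruct (Rlt_or_le x g) as [Hlt|Hle].
  - destruct (MVT_cor2 (hh m) (fun c => Qm m c * exp (- c)) x g Hlt (fun c _ => Der c))
      as [c [Hc Hcin]].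
    assert (0 < Qm m c).
    { destruct (Rlt_or_le 0 (Qm m c)) as [|HQc]; auto.
      pose proof (Qm_sign m c g ltac:(lra) HQc). lra. }
    assert (0 < exp (- c)) by apply exp_pos.
    assert (0 < Qm m c * exp (- c) * (g - x)) by (apply Rmult_lt_0_compat; [apply Rmult_lt_0_compat|]; lra).
    lra.
  - assert (Hlt : g < x) by lra.
    destruct (MVT_cor2 (hh m) (fun c => Qm m c * exp (- c)) g x Hlt (fun c _ => Der c))
      as [c [Hc Hcin]].
    assert (Qm m c < 0) by (apply (Qm_sign m g c); lra).
    assert (0 < exp (- c)) by apply exp_pos.
    assert (0 < - Qm m c * exp (- c) * (x - g)) by (apply Rmult_lt_0_compat; [apply Rmult_lt_0_compat|]; lra).
    lra.
Qed.

Theorem corollary1 (L : nat) (alpha gamma : R) :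
  (1 <= L)%nat -> 2 < alpha -> 0 < gamma ->
  exists g : R,
    (* g = g(L) is the (unique) positive root of Q *)
    0 < g /\ Qpoly L g = 0 /\
    (forall t, 0 < t -> Qpoly L t = 0 -> t = g) /\
    INR L / 2 <= g <= INR L /\
    (let lmax := g / (Delta_alpha alpha * Rpower gamma (2 / alpha)) in
     (* lmax is the argmax over [0, oo) of lambda (1 - F(gamma, lambda)) *)
     0 <= lmax /\
     (forall lambda, 0 <= lambda ->
        throughput L alpha gamma lambda <= throughput L alpha gamma lmax) /\
     (forall lambda, 0 <= lambda ->
        throughput L alpha gamma lambda = throughput L alpha gamma lmax ->
        lambda = lmax) /\
     (* maximal spatial throughput *)
     throughput L alpha gamma lmax =
       g ^ (L + 1) / (INR (Factorial.fact (L - 1)) * Delta_alpha alpha * Rpower gamma (2 / alpha))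
       * exp (- g)).
Proof.
  intros HL Ha Hgam. destruct L as [|m]; [lia|].
  assert (HDel : 0 < Delta_alpha alpha).
  { unfold Delta_alpha. pose proof PI_RGT_0.
    assert (0 < 2 / alpha < 1).
    { split. apply Rdiv_lt_0_compat; lra.
      apply Rmult_lt_reg_r with alpha; [lra|]. unfold Rdiv. rewrite Rmult_assoc, Rinv_l by lra. lra. }
    pose proof (Gamma_pos (2 / alpha) ltac:(lra)).
    pose proof (Gamma_pos (1 - 2 / alpha) ltac:(lra)).
    apply Rmult_lt_0_compat; [apply Rmult_lt_0_compat; [apply Rmult_lt_0_compat|]|]; lra. }
  assert (HRp : 0 < Rpower gamma (2 / alpha)) by (unfold Rpower; apply exp_pos).
  set (D := Delta_alpha alpha * Rpower gamma (2 / alpha)).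
  assert (HD : 0 < D) by (unfold D; apply Rmult_lt_0_compat; auto).
  assert (HQ : forall t, Qpoly (S m) t = Qm m t).
  { intros t. unfold Qpoly, Qm, Sx. replace (S m - 1)%nat with m by lia. reflexivity. }
  assert (HT : forall l, throughput (S m) alpha gamma l = hh m (l * D) / D).
  { intros l. unfold throughput, outage, hh. cbv zeta. replace (S m - 1)%nat with m by lia.
    replace (l * Delta_alpha alpha * Rpower gamma (2 / alpha)) with (l * D) by (unfold D; ring).
    change (sum_f_R0 (fun i => (l * D) ^ i / INR (Factorial.fact i)) m) with (Sx m (l * D)).
    field. lra. }
  destruct (root_exists m) as [g [Hgb HQg]].
  assert (H0 : 0 < INR (S m)) by (apply lt_0_INR; lia).
  assert (Hg : 0 < g) by lra.
  exists g. split; [exact Hg|]. split; [rewrite HQ; exact HQg|].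
  split.
  { intros t Ht HQt. rewrite HQ in HQt.
    destruct (Rtotal_order t g) as [Hlt|[Heq|Hgt]]; auto.
    - pose proof (Qm_sign m t g ltac:(lra) ltac:(lra)). lra.
    - pose proof (Qm_sign m g t ltac:(lra) ltac:(lra)). lra. }
  split; [exact Hgb|].
  intros lmax. fold D in lmax.
  assert (Hlm : lmax * D = g) by (unfold lmax; field; lra).
  assert (Hstrict := hh_strict m g Hg HQg).
  split; [unfold lmax; apply Rdiv_le_0_compat; lra|].
  split.
  { intros l Hl. rewrite !HT, Hlm. unfold Rdiv. apply Rmult_le_compat_r.
    left; apply Rinv_0_lt_compat; auto.
    destruct (Req_dec (l * D) g) as [->|Hne]; [lra|].
    left. apply Hstrict; auto. apply Rmult_le_pos; lra. }
  split.
  { intros l Hl Heq. rewrite !HT, Hlm in Heq.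
    destruct (Req_dec (l * D) g) as [E|Hne].
    - unfold lmax. rewrite <- E. field. lra.
    - exfalso. assert (hh m (l * D) < hh m g) by (apply Hstrict; auto; apply Rmult_le_pos; lra).
      assert (hh m (l * D) = hh m g).
      { apply (Rmult_eq_reg_r (/ D)); [exact Heq|]. apply Rinv_neq_0_compat; lra. }
      lra. }
  rewrite HT, Hlm. replace (S m - 1)%nat with m by lia. fold D.
  unfold hh. unfold Qm in HQg.
  assert (HS : Sx m g = g ^ S m / INR (Factorial.fact m)) by lra.
  rewrite HS. rewrite pow_add. pose proof (fact_pos' m).
  replace (INR (Factorial.fact m) * Delta_alpha alpha * Rpower gamma (2 / alpha)) with (INR (Factorial.fact m) * D) by (unfold D; ring).
  simpl pow. field. split; lra.
Qed.
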